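(* Let $c_0\neq 0$ and $c_1$ be real constants and consider the Newtonian system in the Euclidean plane $\ddot x=-\partial_x V_1$, $\ddot y=-\partial_y V_1$ with potential $V_1(x,y)=c_0(x^2+9y^2)+c_1y$. Then $$J_1=(x\dot y-y\dot x)\dot x^2-\frac{c_1}{18c_0}\dot x^3+\frac{c_1}{3}x^2\dot x+6c_0x^2y\dot x-\frac{2c_0}{3}x^3\dot y$$ is constant along every solution. *)

(* Defs.v *)
From Stdlib Require Import Reals.
From Coquelicot Require Import Coquelicot.
Open Scope R_scope.

Definition V1 (c0 c1 : R) (x y : R) : R := c0 * (x ^ 2 + 9 * y ^ 2) + c1 * y.

Definition dV1_dx (c0 c1 : R) (x y : R) : R := Derive (fun u => V1 c0 c1 u y) x.
Definition dV1_dy (c0 c1 : R) (x y : R) : R := Derive (fun v => V1 c0 c1 x v) y.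

Definition is_solution (c0 c1 : R) (x y vx vy : R -> R) : Prop :=
  forall t : R,
    is_derive x t (vx t) /\ is_derive y t (vy t) /\
    is_derive vx t (- dV1_dx c0 c1 (x t) (y t)) /\
    is_derive vy t (- dV1_dy c0 c1 (x t) (y t)).

Definition J1 (c0 c1 : R) (x y xd yd : R) : R :=
  (x * yd - y * xd) * xd ^ 2 - c1 / (18 * c0) * xd ^ 3 + c1 / 3 * x ^ 2 * xd
  + 6 * c0 * x ^ 2 * y * xd - 2 * c0 / 3 * x ^ 3 * yd.

(* Main.v *)
Require Import Defs.
From Stdlib Require Import Reals Lra.
From Coquelicot Require Import Coquelicot.
Open Scope R_scope.

Lemma dx (c0 c1 a b : R) : dV1_dx c0 c1 a b = 2 * c0 * a.
Proof.
  unfold dV1_dx, V1. apply is_derive_unique. auto_derive; auto. ring.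
Qed.
Lemma dy (c0 c1 a b : R) : dV1_dy c0 c1 a b = 18 * c0 * b + c1.
Proof.
  unfold dV1_dy, V1. apply is_derive_unique. auto_derive; auto. ring.
Qed.

Lemma dmul (f g : R -> R) t a b : is_derive f t a -> is_derive g t b ->
  is_derive (fun s => f s * g s) t (a * g t + f t * b).
Proof. intros; apply (is_derive_mult f g); auto. intros; apply Rmult_comm. Qed.

Lemma dplus (f g : R -> R) t a b : is_derive f t a -> is_derive g t b ->
  is_derive (fun s => f s + g s) t (a + b).
Proof. intros; apply (is_derive_plus f g); auto. Qed.
Lemma dminus (f g : R -> R) t a b : is_derive f t a -> is_derive g t b ->
  is_derive (fun s => f s - g s) t (a - b).
Proof. intros; apply (is_derive_minus f g); auto. Qed.
Lemma dconst (c t : R) : is_derive (fun _ : R => c) t 0.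
Proof. apply (is_derive_const c). Qed.

Ltac ld := match goal with
  | |- is_derive (fun s => @?f s + @?g s) _ _ => eapply dplus; [ld|ld]
  | |- is_derive (fun s => @?f s - @?g s) _ _ => eapply dminus; [ld|ld]
  | |- is_derive (fun s => @?f s * @?g s) _ _ => eapply dmul; [ld|ld]
  | |- is_derive (fun s => @?f s ^ _) _ _ => eapply is_derive_pow; ld
  | |- is_derive (fun s => ?c) _ _ => eapply dconst
  | |- _ => first [eassumption | idtac]
  end.

Theorem mainTheorem4 (c0 c1 : R) (hc0 : c0 <> 0) (x y vx vy : R -> R) :
  is_solution c0 c1 x y vx vy ->
  forall t1 t2 : R,
    J1 c0 c1 (x t1) (y t1) (vx t1) (vy t1) = J1 c0 c1 (x t2) (y t2) (vx t2) (vy t2).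
Proof.
  intros H t1 t2.
  set (F := fun t => J1 c0 c1 (x t) (y t) (vx t) (vy t)).
  assert (D : forall t, is_derive F t 0).
  { intro t. destruct (H t) as [Hx [Hy [Hvx Hvy]]].
    rewrite dx in Hvx. rewrite dy in Hvy.
    unfold F, J1.
    evar (d : R).
    match goal with |- is_derive ?f _ _ =>
    assert (HD : is_derive f t d) end.
    { unfold d. ld. }
    replace 0 with d. exact HD. unfold d. simpl. set (X := x t); set (Y := y t); set (U := vx t); set (W := vy t). clearbody X Y U W. clear -hc0. field. exact hc0. }
  destruct (MVT_gen F t1 t2 (fun _ => 0)) as [c [_ Hc]].
  - intros; apply D.
  - intros s _. apply continuity_pt_filterlim. apply (ex_derive_continuous (K:=R_AbsRing) (V:=R_NormedModule) F).
    exists 0. apply D.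
  - change (F t1 = F t2). lra.
Qed.
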